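(* Let $p$ be a prime and $G$ a $p$-group of order $p^m$ with $|G/Z(G)|=p^3$. (1) If $G$ has no abelian maximal subgroup, then $$A_G(t)=\frac{1}{p^m}\left(\frac{p^{m-3}}{1-p^mt}+\frac{p^m-p^{m-3}}{1-p^{m-2}t}\right).$$ (2) If $G$ possesses an abelian maximal subgroup, then $$A_G(t)=\frac{1}{p^m}\left(\frac{p^{m-3}}{1-p^mt}+\frac{p^{m-1}-p^{m-3}}{1-p^{m-1}t}+\frac{p^m-p^{m-1}}{1-p^{m-2}t}\right).$$
   Context: For a finite group $G$ and $n\ge0$, let $\alpha_{G,n}$ be the number of orbits of $G$ acting on $G^n$ by simultaneous conjugation, and $A_G(t)=\sum_{n\ge0}\alpha_{G,n}t^n$, viewed as a rational function of $t$. *)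

(* Defs.v *)
From HB Require Import structures.
From mathcomp Require Import all_boot all_order all_algebra all_fingroup all_solvable.
Set Implicit Arguments. Unset Strict Implicit. Unset Printing Implicit Defensive.

Definition tuples_in (gT : finGroupType) (G : {set gT}) (n : nat)
  : {set {ffun 'I_n -> gT}} :=
  [set f : {ffun 'I_n -> gT} | [forall i, f i \in G]].

Definition conj_tuple (gT : finGroupType) (n : nat) (f : {ffun 'I_n -> gT}) (g : gT)
  : {ffun 'I_n -> gT} := [ffun i => ((f i) ^ g)%g].

Definition sconj_orbit (gT : finGroupType) (G : {set gT}) (n : nat)
  (f : {ffun 'I_n -> gT}) : {set {ffun 'I_n -> gT}} :=
  [set conj_tuple f g | g in G].

Definition alpha (gT : finGroupType) (G : {set gT}) (n : nat) : nat :=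
  #|[set sconj_orbit G f | f in tuples_in G n]|.

(* Main.v *)
Require Import Defs.
From HB Require Import structures.
From mathcomp Require Import all_boot all_order all_algebra all_fingroup all_solvable.
From mathcomp Require Import zify.
Import GRing.Theory.
Import Num.Theory.

Section B.
Variables (gT : finGroupType) (n : nat).
Local Notation T := {ffun 'I_n -> gT}.

Lemma ct1 : (@conj_tuple gT n)^~ 1%g =1 id.
Proof. by move=> f; apply/ffunP => i; rewrite ffunE conjg1. Qed.
Lemma ctM : forall f, act_morph (@conj_tuple gT n) f.
Proof. by move=> f a b; apply/ffunP => i; rewrite !ffunE conjgM. Qed.
Definition cact := TotalAction ct1 ctM.

Lemma alpha_burnside (G : {group gT}) :
  (alpha G n * #|G| = \sum_(g in G) #|('C_G[g])%g| ^ n)%N.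
Proof.
have acts : [acts G, on tuples_in G n | cact].
  apply/subsetP => a Ga; apply/astabsP => f; rewrite !inE /=.
  apply/forallP/forallP => H i; have := H i; rewrite /conj_tuple ?ffunE groupJr //.
rewrite /alpha -(Frobenius_Cauchy acts); apply: eq_bigr => g Gg.
rewrite -[n in (_ ^ n)%N]card_ord -card_ffun_on; apply: eq_card => f.
rewrite !inE sub1set inE /=; apply/andP/forallP => [[/forallP H /eqP E] i|H].
  rewrite in_setI H /=; apply/cent1P; apply/commgP/conjg_fixP.
  by move/ffunP: E => /(_ i); rewrite /= /conj_tuple ffunE.
split; first by apply/forallP => i; have := H i; rewrite !inE => /andP[].
apply/eqP/ffunP => i; rewrite /= /conj_tuple ffunE.
have := H i; rewrite in_setI => /andP[_ /cent1P c].
by apply/conjg_fixP/commgP.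
Qed.
End B.

Section Grp.
Local Open Scope group_scope.
Variables (p m : nat) (gT : finGroupType) (G : {group gT}).
Hypotheses (pr : prime p) (pG : p.-group G) (oG : #|G| = (p ^ m)%N)
  (oQ : #|G / 'Z(G)| = (p ^ 3)%N).

Let p1 : 1 < p. Proof. exact: prime_gt1. Qed.

Lemma sub_pow {H : {group gT}} : H \subset G -> exists2 k, k <= m & #|H| = (p ^ k)%N.
Proof. by move=> sHG; apply/(dvdn_pfactor _ _ pr); rewrite -oG; exact: cardSg. Qed.

Lemma card_Z : 3 <= m /\ #|'Z(G)| = (p ^ (m - 3))%N.
Proof.
have := Lagrange (center_sub G).
rewrite -card_quotient ?normal_norm ?center_normal // oQ oG.
have [k _ ->] := sub_pow (center_sub G).
rewrite -expnD => /eqP; rewrite eqn_exp2l // => /eqP <-.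
by split; [exact: leq_addl | rewrite addnK].
Qed.

Lemma cent_sub g : g \in G -> 'Z(G) \subset 'C_G[g].
Proof.
move=> Gg; apply/subsetP => x /centerP [Gx cx].
by rewrite in_setI Gx; apply/cent1P; exact: cx.
Qed.

Lemma centG_Z g : g \in 'Z(G) -> 'C_G[g] = G.
Proof.
move=> /centerP [Gg cg]; apply/eqP; rewrite eqEsubset subsetIl /=.
apply/subsetP => y Gy; rewrite in_setI Gy; apply/cent1P; apply: commute_sym; exact: cg.
Qed.

Lemma cent_card g : g \in G -> g \notin 'Z(G) ->
  #|'C_G[g]| = (p ^ (m - 2))%N \/ #|'C_G[g]| = (p ^ (m - 1))%N.
Proof.
move=> Gg nZg; have [m3 oZ] := card_Z.
have lt1 : #|'Z(G)| < #|'C_G[g]|.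
  apply: proper_card; apply/properP; split; first exact: cent_sub.
  by exists g => //; rewrite in_setI Gg cent1id.
have lt2 : #|'C_G[g]| < #|G|.
  case: (ltnP #|'C_G[g]| #|G|) => // hle.
  have eqC : 'C_G[g] = G by apply/eqP; rewrite eqEcard subsetIl hle.
  case/negP: nZg; apply/centerP; split => // y Gy.
  have : y \in 'C_G[g] by rewrite eqC.
  by rewrite in_setI => /andP[_ /cent1P c]; apply: commute_sym.
have [k _ ok] := sub_pow (subsetIl G 'C[g]).
move: lt1 lt2; rewrite ok oZ oG !ltn_exp2l // => l1 l2.
have : (k = m - 2 \/ k = m - 1) by lia.
by case=> ->; [left|right].
Qed.

Lemma cent_maxab g : g \in G -> g \notin 'Z(G) -> #|'C_G[g]| = (p ^ (m - 1))%N ->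
  maximal 'C_G[g] G && abelian 'C_G[g].
Proof.
move=> Gg nZg oC; have [m3 oZ] := card_Z.
apply/andP; split.
  apply: p_index_maximal; first exact: subsetIl.
  have em : (p ^ m = p ^ (m - 1) * p)%N by rewrite -expnSr; congr (expn _ _); lia.
  have := Lagrange (subsetIl G 'C[g]); rewrite oC oG em.
  move=> /eqP; rewrite eqn_pmul2l ?expn_gt0 ?prime_gt0 //.
  by move=> /eqP ->.
have sZK : 'Z(G) \proper 'Z('C_G[g]).
  apply/properP; split.
    apply/subsetP => x Zx; have := Zx; move/centerP => [Gx cx]; apply/centerP; split.
      by rewrite in_setI Gx; apply/cent1P; apply: cx.
    by move=> y /setIP [Gy _]; exact: cx.
  exists g => //; apply/centerP; split; first by rewrite in_setI Gg cent1id.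
  by move=> y /setIP [_ /cent1P c]; exact: commute_sym c.
have sKC := center_sub 'C_G[g].
have [j _ oK] := sub_pow (subset_trans sKC (subsetIl G 'C[g])).
have := proper_card sZK; rewrite oK oZ ltn_exp2l // => lj.
have := subset_leq_card sKC; rewrite oK oC leq_exp2l // => lj2.
have : j = m - 2 \/ j = m - 1 by lia.
case=> ej.
  apply: cyclic_center_factor_abelian; apply: prime_cyclic.
  rewrite card_quotient ?normal_norm ?center_normal //.
  have em : (p ^ (m - 1) = p ^ (m - 2) * p)%N by rewrite -expnSr; congr (expn _ _); lia.
  have := Lagrange sKC; rewrite oK oC ej em => /eqP; rewrite eqn_pmul2l ?expn_gt0 ?prime_gt0 //.
  by move=> /eqP ->.
have eK : 'Z('C_G[g]) = 'C_G[g].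
  by apply/eqP; rewrite eqEcard sKC oK oC ej leqnn.
rewrite -eK; exact: center_abelian.
Qed.


Lemma ab_comm (M : {group gT}) x y : abelian M -> x \in M -> y \in M -> commute x y.
Proof. by move=> aM Mx My; exact: (centsP aM) x Mx y My. Qed.

Lemma outM (M : {group gT}) : M \subset G -> abelian M -> #|M| = (p ^ (m - 1))%N ->
  forall g, g \in G -> g \notin M -> #|'C_G[g]| < (p ^ (m - 1))%N.
Proof.
move=> sMG aM oM g Gg nMg; have [m3 oZ] := card_Z.
rewrite ltnNge; apply/negP => hC.
have sIZ : M :&: 'C_G[g] \subset 'Z(G).
  apply/subsetP => x /setIP [Mx /setIP [Gx /cent1P cxg]].
  have sMC : M \subset 'C_G[x].
    apply/subsetP => y My; rewrite in_setI (subsetP sMG y My); apply/cent1P.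
    exact: ab_comm aM My Mx.
  have eC : 'C_G[x] = G.
    have lt : #|M| < #|'C_G[x]|.
      apply: proper_card; apply/properP; split => //; exists g => //.
      by rewrite in_setI Gg; apply/cent1P; exact: commute_sym cxg.
    have [k _ ok] := sub_pow (subsetIl G 'C[x]).
    move: lt; rewrite ok oM ltn_exp2l // => lk.
    apply/eqP; rewrite eqEcard subsetIl ok oG leq_exp2l //; lia.
  apply/centerP; split => // y Gy.
  have : y \in 'C_G[x] by rewrite eC.
  by rewrite in_setI => /andP[_ /cent1P c]; apply: commute_sym.
have e := mul_cardG M 'C_G[g].
have le1 : #|M * 'C_G[g]| <= #|G|.
  by apply: subset_leq_card; apply: mul_subG => //; exact: subsetIl.
have le2 := subset_leq_card sIZ.
have : (p ^ (m - 1) * p ^ (m - 1) <= p ^ m * p ^ (m - 3))%N.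
  rewrite -oG -oZ; apply: leq_trans (leq_mul le1 le2).
  by rewrite -e oM leq_mul2l hC orbT.
rewrite -!expnD leq_exp2l //; lia.
Qed.

End Grp.

Local Open Scope ring_scope.

Lemma rat_conv {a S P : nat} : (a * P = S)%N -> (0 < P)%N ->
  a%:R = (P%:R)^-1 * S%:R :> rat.
Proof.
move=> e P0; rewrite -e natrM [a%:R * _]mulrC mulKf // pnatr_eq0 -lt0n; exact: P0.
Qed.

Theorem theorem7p3 (p m : nat) (gT : finGroupType) (G : {group gT}) :
  prime p -> (p.-group G)%g -> #|G| = (p ^ m)%N ->
  #|(G / 'Z(G)%g)%g| = (p ^ 3)%N ->
  ((~~ [exists M : {group gT}, maximal M G && abelian M]) ->
    forall n : nat,
      (alpha G n)%:R =
        ((p%:R : rat) ^+ m)^-1 *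
        ((p%:R : rat) ^+ (m - 3) * ((p%:R : rat) ^+ m) ^+ n
         + ((p%:R : rat) ^+ m - (p%:R : rat) ^+ (m - 3))
           * ((p%:R : rat) ^+ (m - 2)) ^+ n))
  /\
  ([exists M : {group gT}, maximal M G && abelian M] ->
    forall n : nat,
      (alpha G n)%:R =
        ((p%:R : rat) ^+ m)^-1 *
        ((p%:R : rat) ^+ (m - 3) * ((p%:R : rat) ^+ m) ^+ n
         + ((p%:R : rat) ^+ (m - 1) - (p%:R : rat) ^+ (m - 3))
           * ((p%:R : rat) ^+ (m - 1)) ^+ n
         + ((p%:R : rat) ^+ m - (p%:R : rat) ^+ (m - 1))
           * ((p%:R : rat) ^+ (m - 2)) ^+ n)).
Proof.
move=> pr pG oG oQ.
have [m3 oZ] := card_Z _ _ _ _ pr oG oQ.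
have p1 : (1 < p)%N := prime_gt1 pr.
have p0 : (0 < p)%N := prime_gt0 pr.
have sZG := center_sub G.
have le31 : (p ^ (m - 3) <= p ^ (m - 1))%N by rewrite leq_exp2l //; lia.
have le10 : (p ^ (m - 1) <= p ^ m)%N by rewrite leq_exp2l //; lia.
have le30 : (p ^ (m - 3) <= p ^ m)%N by rewrite leq_exp2l //; lia.
split.
  move=> noab n.
  have E : (alpha G n * p ^ m = p ^ (m - 3) * (p ^ m) ^ n
              + (p ^ m - p ^ (m - 3)) * (p ^ (m - 2)) ^ n)%N.
    rewrite -{1}oG alpha_burnside (big_setID ('Z(G))%g) /= (setIidPr sZG).
    congr (_ + _)%N.
      rewrite (eq_bigr (fun _ => (p ^ m) ^ n)%N); last by move=> g Zg; rewrite centG_Z // oG.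
      by rewrite sum_nat_const oZ.
    rewrite (eq_bigr (fun _ => (p ^ (m - 2)) ^ n)%N).
      by rewrite sum_nat_const cardsD (setIidPr sZG) oG oZ.
    move=> g /setDP [Gg nZg]; case: (cent_card _ _ _ _ pr pG oG oQ _ Gg nZg) => [-> // | oC].
    case/negP: noab; apply/existsP; exists [group of 'C_G[g]%g].
    exact: (cent_maxab _ _ _ _ pr pG oG oQ _ Gg nZg oC).
  rewrite (rat_conv E) ?expn_gt0 ?p0 // natrX; congr (_ * _).
  by rewrite natrD !natrM (natrB _ le30) !natrX.
case/existsP => M /andP [maxM abM] n.
have sMG : (M \subset G)%g := proper_sub (maxgroupp maxM).
have oM : #|M| = (p ^ (m - 1))%N.
  have := Lagrange sMG; rewrite (p_maximal_index pG maxM) oG.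
  have -> : (p ^ m = p ^ (m - 1) * p)%N by rewrite -expnSr; congr (expn _ _); lia.
  by move/eqP; rewrite eqn_mul2r (gtn_eqF p0) /= => /eqP.
have outM' := outM _ _ _ _ pr pG oG oQ _ sMG abM oM.
have sZM : ('Z(G)%g \subset M)%g.
  apply/subsetP => z Zz; apply/negPn/negP => nz.
  have := outM' z (subsetP sZG z Zz) nz.
  rewrite centG_Z // oG ltn_exp2l //; lia.
have E : (alpha G n * p ^ m = p ^ (m - 3) * (p ^ m) ^ n
            + (p ^ (m - 1) - p ^ (m - 3)) * (p ^ (m - 1)) ^ n
            + (p ^ m - p ^ (m - 1)) * (p ^ (m - 2)) ^ n)%N.
  rewrite -{1}oG alpha_burnside (big_setID M) /= (setIidPr sMG).
  congr (_ + _)%N.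
    rewrite (big_setID ('Z(G))%g) /= (setIidPr sZM).
    congr (_ + _)%N.
      rewrite (eq_bigr (fun _ => (p ^ m) ^ n)%N); last by move=> g Zg; rewrite centG_Z // oG.
      by rewrite sum_nat_const oZ.
    rewrite (eq_bigr (fun _ => (p ^ (m - 1)) ^ n)%N).
      by rewrite sum_nat_const cardsD (setIidPr sZM) oM oZ.
    move=> g /setDP [Mg nZg]; have Gg := subsetP sMG g Mg.
    case: (cent_card _ _ _ _ pr pG oG oQ _ Gg nZg) => [oC|-> //].
    have : (M \subset 'C_G[g])%g.
      apply/subsetP => y My; rewrite in_setI (subsetP sMG y My); apply/cent1P.
      exact: ab_comm abM My Mg.
    move/subset_leq_card; rewrite oC oM leq_exp2l //; lia.
  rewrite (eq_bigr (fun _ => (p ^ (m - 2)) ^ n)%N).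
    by rewrite sum_nat_const cardsD (setIidPr sMG) oG oM.
  move=> g /setDP [Gg nMg].
  have nZg : g \notin 'Z(G)%g by apply: contra nMg; apply: (subsetP sZM).
  have := outM' g Gg nMg.
  case: (cent_card _ _ _ _ pr pG oG oQ _ Gg nZg) => -> // ; by rewrite ltnn.
rewrite (rat_conv E) ?expn_gt0 ?p0 // natrX; congr (_ * _).
by rewrite !natrD !natrM (natrB _ le31) (natrB _ le10) !natrX.
Qed.
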